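(* A category $S$ is left cancellative (resp., right cancellative) if and only if its universal monoid $\mathrm{U_{mon}}(S)$ is left cancellative (resp., right cancellative). Moreover, $S$ is a groupoid if and only if $\mathrm{U_{mon}}(S)$ is a group.
   Context: Categories are arrow-only: a set $S$ with partial associative multiplication, identities $\mathrm{Id}\,S$, source/target identities. $S$ is left (right) cancellative if $ax=ay\Rightarrow x=y$ (resp. $xa=ya\Rightarrow x=y$) for all $a,x,y$; a groupoid is a category in which every element has a two-sided inverse. $\mathrm{U_{mon}}(S)$ is the monoid presented by generators $\varepsilon_S(x)$ ($x\in S$) and relations $\varepsilon_S(e)=1$ ($e\in\mathrm{Id}\,S$), $\varepsilon_S(x)\varepsilon_S(y)=\varepsilon_S(xy)$ whenever $xy$ is defined. *)

(* Defs.v *)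
From Stdlib Require Import List.
Import ListNotations.
Set Implicit Arguments.

(** Arrow-only categories.  [mul x y = Some z] means "xy is defined and
    equals z".  [src x] / [tgt x] are the source / target identities of x;
    xy is defined iff tgt x = src y. *)
Record category := Category {
  arr :> Type;
  mul : arr -> arr -> option arr;
  src : arr -> arr;
  tgt : arr -> arr;
  src_src : forall x, src (src x) = src x;
  tgt_src : forall x, tgt (src x) = src x;
  src_tgt : forall x, src (tgt x) = tgt x;
  tgt_tgt : forall x, tgt (tgt x) = tgt x;
  mul_defined : forall x y, (exists z, mul x y = Some z) <-> tgt x = src y;
  mul_src_tgt : forall x y z, mul x y = Some z -> src z = src x /\ tgt z = tgt y;
  mul_src_l : forall x, mul (src x) x = Some x;
  mul_tgt_r : forall x, mul x (tgt x) = Some x;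
  mul_assoc : forall x y z xy yz, mul x y = Some xy -> mul y z = Some yz ->
                mul xy z = mul x yz
}.
Arguments mul {c}.
Arguments src {c}.
Arguments tgt {c}.

Definition is_id (S : category) (e : S) : Prop := src e = e.
Arguments is_id {S}.

Definition left_cancellative (S : category) : Prop :=
  forall a x y z : S, mul a x = Some z -> mul a y = Some z -> x = y.

Definition right_cancellative (S : category) : Prop :=
  forall a x y z : S, mul x a = Some z -> mul y a = Some z -> x = y.

Definition groupoid (S : category) : Prop :=
  forall x : S, exists y e f : S,
    mul x y = Some e /\ is_id e /\ mul y x = Some f /\ is_id f.

(** The universal monoid U_mon(S), presented by generators eps(x) (x in S)
    and relations eps(e) = 1 (e in Id S), eps(x) eps(y) = eps(xy).
    Realised as the free monoid (list S, ++, []) modulo the congruence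
    [umon_eq] generated by these relations; eps(x) is [x]. *)
Inductive umon_eq {S : category} : list S -> list S -> Prop :=
  | ue_refl : forall u, umon_eq u u
  | ue_sym : forall u v, umon_eq u v -> umon_eq v u
  | ue_trans : forall u v w, umon_eq u v -> umon_eq v w -> umon_eq u w
  | ue_ctx : forall a b u v, umon_eq u v -> umon_eq (a ++ u ++ b) (a ++ v ++ b)
  | ue_id : forall e, is_id e -> umon_eq [e] []
  | ue_mul : forall x y z, mul x y = Some z -> umon_eq [x; y] [z].

Definition umon_left_cancellative (S : category) : Prop :=
  forall u v w : list S, umon_eq (u ++ v) (u ++ w) -> umon_eq v w.

Definition umon_right_cancellative (S : category) : Prop :=
  forall u v w : list S, umon_eq (v ++ u) (w ++ u) -> umon_eq v w.

Definition umon_group (S : category) : Prop :=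
  forall u : list S, exists v : list S,
    umon_eq (u ++ v) [] /\ umon_eq (v ++ u) [].

(* Main.v *)
Require Import Defs.
From Stdlib Require Import List ClassicalEpsilon.
Import ListNotations.

Definition dec (P : Prop) : {P} + {~ P} := excluded_middle_informative P.

Definition push {S : category} (x : S) (w : list S) : list S :=
  if dec (is_id x) then w else
  match w with
  | [] => [x]
  | y :: w' => match mul x y with
               | Some z => if dec (is_id z) then w' else z :: w'
               | None => x :: w
               end
  end.

Definition act {S : category} (u w : list S) : list S := fold_right push w u.
Definition nf {S : category} (u : list S) : list S := act u [].

Inductive red {S : category} : list S -> Prop :=
  | red_nil : red []
  | red_one : forall x, ~ is_id x -> red [x]
  | red_cons : forall x y w, ~ is_id x -> mul x y = None -> red (y :: w) -> red (x :: y :: w).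

Lemma tgt_id (S : category) (e : S) : is_id e -> tgt e = e.
Proof. unfold is_id; intro H. rewrite <- H at 1. rewrite tgt_src. exact H. Qed.

Lemma id_l (S : category) (x y z : S) : is_id x -> mul x y = Some z -> z = y.
Proof.
  intros Hx H. assert (tgt x = src y) by (apply mul_defined; eauto).
  rewrite tgt_id in H0 by exact Hx. subst x. rewrite mul_src_l in H. congruence.
Qed.

Lemma id_r (S : category) (x y z : S) : is_id y -> mul x y = Some z -> z = x.
Proof.
  intros Hy H. assert (tgt x = src y) by (apply mul_defined; eauto).
  unfold is_id in Hy. rewrite Hy in H0. subst y. rewrite mul_tgt_r in H. congruence.
Qed.

Lemma none_iff (S : category) (a b : S) : mul a b = None <-> tgt a <> src b.
Proof.
  split.
  - intros H E. apply mul_defined in E. destruct E as [z Hz]. congruence.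
  - intros H. destruct (mul a b) eqn:E; auto. exfalso. apply H, mul_defined; eauto.
Qed.

Lemma some_of (S : category) (a b : S) : tgt a = src b -> exists z, mul a b = Some z.
Proof. intro; apply mul_defined; auto. Qed.

Lemma red_tail (S : category) (x : S) w : red (x :: w) -> red w.
Proof. inversion 1; subst; auto using red_nil. Qed.

Lemma red_head (S : category) (x : S) w : red (x :: w) -> ~ is_id x.
Proof. inversion 1; subst; auto. Qed.

Lemma push_red (S : category) (x : S) w : red w -> red (push x w).
Proof.
  intro Hw. unfold push. destruct (dec (is_id x)) as [Hx|Hx]; auto.
  destruct w as [|y w'].
  - constructor; auto.
  - destruct (mul x y) as [z|] eqn:E.
    + destruct (dec (is_id z)) as [Hz|Hz]. eapply red_tail; eauto.
      destruct w' as [|y2 w''].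
      * constructor; auto.
      * inversion Hw; subst. constructor; auto.
        apply none_iff. apply none_iff in H3.
        destruct (mul_src_tgt _ _ _ E) as [_ T]. rewrite T. auto.
    + constructor; auto.
Qed.

Lemma act_red (S : category) (u w : list S) : red w -> red (act u w).
Proof. induction u; simpl; auto. intro; apply push_red; auto. Qed.

Lemma nf_red (S : category) (u : list S) : red (nf u).
Proof. apply act_red, red_nil. Qed.

Lemma push_id (S : category) (e : S) w : is_id e -> push e w = w.
Proof. intro H. unfold push. destruct (dec (is_id e)); tauto. Qed.

Lemma push_nid_nil (S : category) (x : S) : ~ is_id x -> push x [] = [x].
Proof. intro H. unfold push. destruct (dec (is_id x)); tauto. Qed.

Lemma push_nid_cons (S : category) (x y : S) w : ~ is_id x -> push x (y :: w) =
  match mul x y with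
  | Some z => if dec (is_id z) then w else z :: w
  | None => x :: y :: w
  end.
Proof. intro H. unfold push. destruct (dec (is_id x)); tauto. Qed.

Lemma push_comp (S : category) (x y z : S) w :
  mul x y = Some z -> red w -> push x (push y w) = push z w.
Proof.
  intros E Hw.
  destruct (dec (is_id x)) as [Hx|Hx].
  { rewrite push_id by auto. rewrite (id_l _ _ _ _ Hx E). reflexivity. }
  destruct (dec (is_id y)) as [Hy|Hy].
  { rewrite (push_id _ y) by auto. rewrite (id_r _ _ _ _ Hy E). reflexivity. }
  destruct (mul_src_tgt _ _ _ E) as [Sz Tz].
  destruct w as [|w1 w'].
  - rewrite push_nid_nil by auto. rewrite push_nid_cons by auto. rewrite E.
    unfold push. destruct (dec (is_id z)); reflexivity.
  - rewrite (push_nid_cons _ y) by auto.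
    destruct (mul y w1) as [t|] eqn:Eyw.
    + destruct (mul_src_tgt _ _ _ Eyw) as [St Tt].
      assert (Ezw : mul z w1 = mul x t) by (eapply mul_assoc; eauto).
      destruct (dec (is_id t)) as [Ht|Ht].
      * assert (Hxt : mul x t = Some x).
        { assert (tgt x = src t).
          { rewrite St. apply mul_defined. eauto. }
          destruct (some_of _ _ _ H) as [r Hr]. rewrite Hr. f_equal. eapply id_r; eauto. }
        rewrite Hxt in Ezw.
        assert (Hnx : push x w' = x :: w').
        { destruct w' as [|w2 w''].
          { apply push_nid_nil; auto. }
          rewrite push_nid_cons by auto.
          replace (mul x w2) with (@None S); auto.
          symmetry. apply none_iff. inversion Hw as [| |a b c Ha Hab Hred]; subst. apply none_iff in Hab.
          intro C. apply Hab. rewrite <- C.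
          assert (tgt x = src y) by (apply mul_defined; eauto).
          rewrite H, <- St, <- Tt, (tgt_id _ _ Ht). symmetry; exact Ht. }
        rewrite Hnx.
        destruct (dec (is_id z)) as [Hz|Hz].
        { rewrite push_id by auto. rewrite (id_l _ _ _ _ Hz Ezw). reflexivity. }
        rewrite push_nid_cons by auto. rewrite Ezw.
        destruct (dec (is_id x)); [tauto|reflexivity].
      * rewrite push_nid_cons by auto.
        assert (tgt x = src t).
        { rewrite St. apply mul_defined. eauto. }
        destruct (some_of _ _ _ H) as [r Hr]. rewrite Hr. rewrite Hr in Ezw.
        destruct (dec (is_id z)) as [Hz|Hz].
        { rewrite push_id by auto. rewrite <- (id_l _ _ _ _ Hz Ezw).
          destruct (dec (is_id r)) as [Hr'|Hr']; [|reflexivity].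
          exfalso. apply (red_head _ _ _ Hw). rewrite <- (id_l _ _ _ _ Hz Ezw). exact Hr'. }
        rewrite push_nid_cons by auto. rewrite Ezw. reflexivity.
    + rewrite push_nid_cons by auto. rewrite E.
      assert (mul z w1 = None).
      { apply none_iff. apply none_iff in Eyw. rewrite Tz. auto. }
      destruct (dec (is_id z)) as [Hz|Hz].
      * rewrite push_id by auto. reflexivity.
      * rewrite push_nid_cons by auto. rewrite H. reflexivity.
Qed.

Lemma act_app (S : category) (u v w : list S) : act (u ++ v) w = act u (act v w).
Proof. unfold act. apply fold_right_app. Qed.

Lemma act_resp (S : category) (u v : list S) :
  umon_eq u v -> forall w, red w -> act u w = act v w.
Proof.
  induction 1; intros w0 Hw0; auto.
  - symmetry; auto.
  - rewrite IHumon_eq1 by auto. auto.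
  - rewrite (act_app S a (u ++ b)), (act_app S a (v ++ b)). f_equal. rewrite (act_app S u b), (act_app S v b). apply IHumon_eq. apply act_red; auto.
  - simpl. apply push_id; auto.
  - simpl. apply push_comp; auto.
Qed.

Lemma ctx1 (S : category) (a b u v : list S) : umon_eq u v -> umon_eq (a ++ u ++ b) (a ++ v ++ b).
Proof. apply ue_ctx. Qed.

Lemma eq_push (S : category) (x : S) w : umon_eq (x :: w) (push x w).
Proof.
  unfold push. destruct (dec (is_id x)) as [Hx|Hx].
  - apply (@ue_ctx S [] w [x] []). apply ue_id; auto.
  - destruct w as [|y w']. apply ue_refl.
    destruct (mul x y) as [z|] eqn:E; [|apply ue_refl].
    apply ue_trans with (z :: w').
    + apply (@ue_ctx S [] w' [x;y] [z]). apply ue_mul; auto.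
    + destruct (dec (is_id z)). apply (@ue_ctx S [] w' [z] []). apply ue_id; auto.
      apply ue_refl.
Qed.

Lemma eq_nf (S : category) (u : list S) : umon_eq u (nf u).
Proof.
  induction u as [|x u IH]. apply ue_refl.
  unfold nf; simpl. apply ue_trans with (x :: nf u).
  - apply (@ue_ctx S [x] [] u (nf u)) in IH. simpl in IH. rewrite !app_nil_r in IH. exact IH.
  - apply eq_push.
Qed.

Lemma umon_iff (S : category) (u v : list S) : umon_eq u v <-> nf u = nf v.
Proof.
  split.
  - intro H. apply act_resp; auto. apply red_nil.
  - intro H. apply ue_trans with (nf u). apply eq_nf. rewrite H. apply ue_sym, eq_nf.
Qed.

Lemma nf_cons (S : category) (x : S) u : nf (x :: u) = push x (nf u).
Proof. reflexivity. Qed.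

Lemma push_inj (S : category) (a : S) v w : left_cancellative S -> red v -> red w ->
  push a v = push a w -> v = w.
Proof.
  intros LC Hv Hw E.
  destruct (dec (is_id a)) as [Ha|Ha].
  { rewrite !push_id in E by auto. exact E. }
  assert (K : forall u, red u ->
    (push a u = a :: u /\ (forall u1 u', u = u1 :: u' -> mul a u1 = None)) \/
    (exists u1 u' t, u = u1 :: u' /\ mul a u1 = Some t /\ is_id t /\ push a u = u') \/
    (exists u1 u' t, u = u1 :: u' /\ mul a u1 = Some t /\ ~ is_id t /\ push a u = t :: u')).
  { intros u Hu. destruct u as [|u1 u'].
    - left. split. apply push_nid_nil; auto. discriminate.
    - rewrite push_nid_cons by auto. destruct (mul a u1) as [t|] eqn:Et.
      + destruct (dec (is_id t)).
        * right; left. exists u1, u', t. auto.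
        * right; right. exists u1, u', t. auto.
      + left. split; auto. intros ? ? Q; injection Q; intros; subst; auto. }
  assert (Cid : forall u1 t, mul a u1 = Some t -> is_id t -> t = src a).
  { intros u1 t Et Ht. destruct (mul_src_tgt _ _ _ Et) as [St _]. rewrite <- St. symmetry; exact Ht. }
  assert (AB : forall u u1 u' t, red u -> red (u1 :: u') -> mul a u1 = Some t -> is_id t ->
     u' <> a :: u).
  { intros u u1 u' t Hu Hr Et Ht Q. subst u'. inversion Hr as [| |b c d Hb Hbc Hd]; subst.
    apply none_iff in Hbc. apply Hbc.
    destruct (mul_src_tgt _ _ _ Et) as [St Tt]. rewrite <- Tt, <- St.
    rewrite (tgt_id _ _ Ht). symmetry; exact Ht. }
  assert (AC : forall u u1 u' t, red (u1 :: u') -> mul a u1 = Some t -> ~ is_id t ->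
     t :: u' <> a :: u).
  { intros u u1 u' t Hr Et Ht Q. injection Q as Hta Hu'. subst t.
    apply (red_head _ _ _ Hr). assert (Hat : mul a (tgt a) = Some a) by apply mul_tgt_r.
    assert (u1 = tgt a) by (eapply LC; eauto).
    subst u1. unfold is_id. apply src_tgt. }
  assert (BC : forall u1 u' t v1 v' r, red (u1 :: u') -> mul a u1 = Some t -> is_id t ->
     mul a v1 = Some r -> ~ is_id r -> u' <> r :: v').
  { intros u1 u' t v1 v' r Hr Et Ht Er Hrr Q. subst u'.
    inversion Hr as [| |b c d Hb Hbc Hd]; subst. apply none_iff in Hbc. apply Hbc.
    destruct (mul_src_tgt _ _ _ Et) as [St Tt]. destruct (mul_src_tgt _ _ _ Er) as [Sr _].
    rewrite Sr, <- Tt, <- St. rewrite (tgt_id _ _ Ht). symmetry; exact Ht. }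
  destruct (K v Hv) as [[Pv _]|[[v1 [v' [t [-> [Et [Ht Pv]]]]]]|[v1 [v' [t [-> [Et [Ht Pv]]]]]]]];
  destruct (K w Hw) as [[Pw _]|[[w1 [w' [r [-> [Er [Hr Pw]]]]]]|[w1 [w' [r [-> [Er [Hr Pw]]]]]]]];
  rewrite Pv, Pw in E.
  - congruence.
  - exfalso. exact (AB v w1 w' r Hv Hw Er Hr (eq_sym E)).
  - exfalso. exact (AC v w1 w' r Hw Er Hr (eq_sym E)).
  - exfalso. exact (AB w v1 v' t Hw Hv Et Ht E).
  - subst. rewrite (Cid _ _ Et Ht) in Et. rewrite (Cid _ _ Er Hr) in Er.
    f_equal. eapply LC; eauto.
  - exfalso. exact (BC v1 v' t w1 w' r Hv Et Ht Er Hr E).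
  - exfalso. exact (AC w v1 v' t Hv Et Ht E).
  - exfalso. exact (BC w1 w' r v1 v' t Hw Er Hr Et Ht (eq_sym E)).
  - injection E; intros; subst. f_equal. eapply LC; eauto.
Qed.

Lemma left_part (S : category) : left_cancellative S <-> umon_left_cancellative S.
Proof.
  split.
  - intros LC u. induction u as [|a u IH]; intros v w H; [exact H|].
    apply IH. apply umon_iff. apply umon_iff in H.
    change (push a (nf (u++v)) = push a (nf (u++w))) in H. eapply push_inj; eauto using nf_red.
  - intros UL a x y z Ex Ey.
    assert (H : umon_eq ([a] ++ [x]) ([a] ++ [y])).
    { simpl. apply ue_trans with [z]. apply ue_mul; auto. apply ue_sym, ue_mul; auto. }
    apply UL, umon_iff in H. unfold nf in H; simpl in H.
    assert (Tx : tgt a = src x) by (apply mul_defined; eauto).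
    assert (Ty : tgt a = src y) by (apply mul_defined; eauto).
    unfold push in H.
    destruct (dec (is_id x)) as [Hx|Hx]; destruct (dec (is_id y)) as [Hy|Hy]; try discriminate.
    + unfold is_id in Hx, Hy. congruence.
    + congruence.
Qed.

Definition opc (S : category) : category.
Proof.
  refine (@Category (arr S) (fun x y => mul y x) (@tgt S) (@src S) _ _ _ _ _ _ _ _ _).
  - apply tgt_tgt.
  - apply src_tgt.
  - apply tgt_src.
  - apply src_src.
  - intros x y. rewrite (mul_defined _ y x). split; auto.
  - intros x y z H. destruct (mul_src_tgt _ _ _ H). auto.
  - intros x. apply mul_tgt_r.
  - intros x. apply mul_src_l.
  - intros x y z xy yz H1 H2. symmetry. eapply mul_assoc; eauto.
Defined.

Lemma rev_op (S : category) (u v : list S) : umon_eq u v -> @umon_eq (opc S) (rev u) (rev v).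
Proof.
  induction 1.
  - apply ue_refl.
  - apply ue_sym; auto.
  - eapply ue_trans; eauto.
  - rewrite !rev_app_distr, <- !app_assoc. apply (@ue_ctx (opc S)). auto.
  - apply (@ue_id (opc S)). unfold is_id in *. simpl. rewrite <- H. apply tgt_src.
  - apply (@ue_mul (opc S)). exact H.
Qed.

Lemma rev_op' (S : category) (u v : list S) : @umon_eq (opc S) u v -> @umon_eq S (rev u) (rev v).
Proof.
  induction 1.
  - apply ue_refl.
  - apply ue_sym; auto.
  - eapply ue_trans; eauto.
  - rewrite !rev_app_distr, <- !app_assoc. apply (@ue_ctx S). auto.
  - apply (@ue_id S). unfold is_id in *. simpl in H. rewrite <- H. apply src_tgt.
  - apply (@ue_mul S). exact H.
Qed.

Lemma right_part (S : category) : right_cancellative S <-> umon_right_cancellative S.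
Proof.
  assert (E1 : right_cancellative S <-> left_cancellative (opc S)).
  { unfold right_cancellative, left_cancellative. simpl. tauto. }
  assert (E2 : umon_right_cancellative S <-> umon_left_cancellative (opc S)).
  { unfold umon_right_cancellative, umon_left_cancellative. split.
    - intros H u v w Q. apply rev_op' in Q. rewrite !rev_app_distr in Q.
      apply H in Q. apply rev_op in Q. rewrite !rev_involutive in Q. exact Q.
    - intros H u v w Q. apply rev_op in Q. rewrite !rev_app_distr in Q.
      apply H in Q. apply rev_op' in Q. rewrite !rev_involutive in Q. exact Q. }
  rewrite E1, E2. apply left_part.
Qed.

Lemma group_part (S : category) : groupoid S <-> umon_group S.
Proof.
  split.
  - intros G u. induction u as [|x u [v [H1 H2]]].
    + exists []. split; apply ue_refl.
    + destruct (G x) as [y [e [f [Exy [He [Eyx Hf]]]]]].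
      exists (v ++ [y]). split.
      * apply ue_trans with ([x] ++ [] ++ [y]).
        { replace ((x :: u) ++ v ++ [y]) with ([x] ++ (u ++ v) ++ [y])
            by (simpl; rewrite app_assoc; reflexivity).
          apply (@ue_ctx S). exact H1. }
        simpl. apply ue_trans with [e]. apply ue_mul; auto. apply ue_id; auto.
      * apply ue_trans with (v ++ [] ++ u).
        { replace ((v ++ [y]) ++ x :: u) with (v ++ [y; x] ++ u)
            by (rewrite <- app_assoc; reflexivity).
          apply (@ue_ctx S). apply ue_trans with [f]. apply ue_mul; auto. apply ue_id; auto. }
        exact H2.
  - intros G x.
    destruct (dec (is_id x)) as [Hx|Hx].
    { exists x, x, x. assert (mul x x = Some x).
      { unfold is_id in Hx. rewrite <- Hx at 1. apply mul_src_l. }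
      auto. }
    destruct (G [x]) as [v [H1 H2]].
    apply umon_iff in H1. apply umon_iff in H2.
    change (push x (nf v) = []) in H1.
    assert (Hv := nf_red S v).
    destruct (nf v) as [|n1 n'] eqn:Env.
    { rewrite push_nid_nil in H1 by auto. discriminate. }
    rewrite push_nid_cons in H1 by auto.
    destruct (mul x n1) as [t|] eqn:Et; [|discriminate].
    destruct (dec (is_id t)) as [Ht|Ht]; [|discriminate]. subst n'.
    unfold nf in H2. rewrite act_app in H2.
    change (act [x] []) with (push x []) in H2.
    rewrite push_nid_nil in H2 by auto.
    rewrite (act_resp S v (nf v) (eq_nf S v) [x]) in H2 by (constructor; auto).
    rewrite Env in H2. simpl in H2.
    assert (Hn1 : ~ is_id n1) by (eapply red_head; eauto).
    rewrite push_nid_cons in H2 by auto.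
    destruct (mul n1 x) as [f|] eqn:Ef; [|discriminate].
    destruct (dec (is_id f)) as [Hf|Hf]; [|discriminate].
    exists n1, t, f. auto.
Qed.

Theorem corollary4p3 (S : category) :
  (left_cancellative S <-> umon_left_cancellative S) /\
  (right_cancellative S <-> umon_right_cancellative S) /\
  (groupoid S <-> umon_group S).
Proof.
  split; [apply left_part|split; [apply right_part|apply group_part]].
Qed.
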